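(* Let $p,q\geq 5$ be two distinct primes. Then there is no $(p+q)\times(p+q)$ circulant complex Hadamard matrix all of whose entries are $pq$-th roots of unity, i.e. $C^{circ}_{p+q}(pq)=\emptyset$.
   Context: A complex Hadamard matrix of order $n$ is a matrix $H\in M_n(\mathbb C)$ with $|H_{ij}|=1$ for all $i,j$ and pairwise orthogonal rows. A matrix $H=(H_{ij})_{i,j=0}^{n-1}$ is circulant if $H_{ij}$ depends only on $j-i$ modulo $n$. $C^{circ}_n(l)$ denotes the set of $n\times n$ circulant complex Hadamard matrices whose entries are all $l$-th roots of unity. *)

(* Defs.v *)
(* complex numbers modelled by algC (algebraic complex numbers);
   roots of unity are algebraic, so every matrix in C^circ_n(l) has algC entries. *)
From HB Require Import structures.
From mathcomp Require Import all_boot all_order all_algebra all_field.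
Set Implicit Arguments. Unset Strict Implicit. Unset Printing Implicit Defensive.
Import Order.TTheory GRing.Theory Num.Theory.
Local Open Scope ring_scope.

Definition complex_hadamard (n : nat) (H : 'M[algC]_n) : Prop :=
  (forall i j, `|H i j| = 1) /\
  (forall i j : 'I_n, i != j -> \sum_(k < n) H i k * (H j k)^* = 0).

Definition circulant (n : nat) (H : 'M[algC]_n) : Prop :=
  forall i j i' j' : 'I_n,
    ((j + (n - i)) %% n = (j' + (n - i')) %% n)%N -> H i j = H i' j'.

Definition entries_roots_of_unity (l n : nat) (H : 'M[algC]_n) : Prop :=
  forall i j, (H i j) ^+ l = 1.

Definition Ccirc (n l : nat) (H : 'M[algC]_n) : Prop :=
  complex_hadamard H /\ circulant H /\ entries_roots_of_unity l H.

(* Main.v *)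
Require Import Defs.
From HB Require Import structures.
From mathcomp Require Import all_boot all_order all_algebra all_field.
From mathcomp Require Import zify ring lra.
Import Order.TTheory GRing.Theory Num.Theory.
Local Open Scope ring_scope.

Lemma geom_sum (w : algC) (N m : nat) : N.-primitive_root w ->
  \sum_(i < N) w ^+ (i * m) = if (N %| m)%N then N%:R else 0.
Proof.
move=> pw; have N0 : (0 < N)%N := prim_order_gt0 pw.
have E : forall i : 'I_N, w ^+ (i * m) = (w ^+ m) ^+ i.
  by move=> i; rewrite mulnC exprM.
rewrite (eq_bigr _ (fun i _ => E i)).
case: ifP => Hd.
  have wm1 : w ^+ m = 1 by apply/eqP; rewrite -(prim_order_dvd pw).
  by rewrite wm1 (eq_bigr (fun _ => 1)) ?sumr_const ?card_ord // => i _; rewrite expr1n.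
have y1 : w ^+ m - 1 != 0 by rewrite subr_eq0 -(prim_order_dvd pw) Hd.
have : (w ^+ m - 1) * \sum_(i < N) (w ^+ m) ^+ i = 0.
  by rewrite -subrX1 -exprM mulnC exprM (prim_expr_order pw) expr1n subrr.
by move/eqP; rewrite mulf_eq0 (negbTE y1) /= => /eqP.
Qed.

Lemma geom_sum1 (w : algC) (N m : nat) : N.-primitive_root w ->
  \sum_(i < N.-1) w ^+ (i.+1 * m) = (if (N %| m)%N then N%:R else 0) - 1.
Proof.
move=> pw; have := @geom_sum w N m pw; have N0 : (0 < N)%N := prim_order_gt0 pw.
case: N pw N0 => [|N] // pw _.
rewrite big_ord_recl /= mul0n expr0 => <-; by rewrite addrC addKr.
Qed.

Lemma gal_sum (N : nat) (z : algC) n (e : 'I_n -> nat) j :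
  N.-primitive_root z -> \sum_k z ^+ e k = 0 -> coprime j N ->
  \sum_k z ^+ (j * e k) = 0.
Proof.
move=> pz S0 cj; have [u Hu] := Qn_aut_exists cj.
transitivity (u (\sum_k z ^+ e k)); last by rewrite S0 rmorph0.
rewrite rmorph_sum; apply: eq_bigr => k _; rewrite Hu; first by rewrite -exprM mulnC.
by rewrite -exprM mulnC exprM (prim_expr_order pz) expr1n.
Qed.

Lemma dvd_shift d N a b : (0 < N)%N -> (d %| N)%N ->
  (d %| a + (N - 1) * b)%N = (a == b %[mod d]).
Proof.
move=> N0 /dvdnP [c Nc].
have E : (a + (N - 1) * b + b = b * c * d + a)%N.
  by rewrite -addnA -{2}(mul1n b) -mulnDl subnK // Nc addnC mulnC mulnA.
transitivity ((a + (N - 1) * b + b == 0 + b %[mod d])).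
  by rewrite eqn_modDr mod0n.
by rewrite E add0n modnMDl.
Qed.

Lemma ident p q (z : algC) n (e : 'I_n -> nat) f :
  prime p -> prime q -> p != q -> (p * q).-primitive_root z ->
  \sum_k z ^+ e k = 0 ->
  (p * \sum_k (p %| e k + f) + q * \sum_k (q %| e k + f) =
   n + p * q * \sum_k ((p %| e k + f) && (q %| e k + f)))%N.
Proof.
move=> pp pq npq pz S0.
have p0 := prime_gt0 pp; have q0 := prime_gt0 pq.
have pw : p.-primitive_root (z ^+ q).
  by have := dvdn_prim_root pz (dvdn_mulr q (dvdnn p)); rewrite mulKn.
have qw : q.-primitive_root (z ^+ p).
  by have := dvdn_prim_root pz (dvdn_mull p (dvdnn q)); rewrite mulnK.
have cop : forall r t : nat, (r < p.-1)%N -> (t < q.-1)%N ->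
    coprime (r.+1 * q + t.+1 * p) (p * q).
  move=> r t hr ht; rewrite coprimeMr; apply/andP; split.
    rewrite coprime_sym prime_coprime // (dvdn_addl _ (dvdn_mull _ (dvdnn p))).
    rewrite Euclid_dvdM // negb_or (dvdn_prime2 pp pq) npq andbT gtnNdvd //.
    by rewrite -(prednK p0) ltnS.
  rewrite coprime_sym prime_coprime // (dvdn_addr _ (dvdn_mull _ (dvdnn q))).
  rewrite Euclid_dvdM // negb_or (dvdn_prime2 pq pp) eq_sym npq andbT gtnNdvd //.
  by rewrite -(prednK q0) ltnS.
have key : 0 = \sum_k ((if (p %| e k + f)%N then p%:R else 0) - 1) *
                      ((if (q %| e k + f)%N then q%:R else 0) - 1) :> algC.
  transitivity (\sum_(r < p.-1) \sum_(t < q.-1) \sum_k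
                  z ^+ ((r.+1 * q + t.+1 * p) * (e k + f))).
    symmetry; apply: big1 => r _; apply: big1 => t _.
    under eq_bigr => k _ do rewrite mulnDr exprD.
    by rewrite -mulr_suml (@gal_sum _ _ _ _ _ pz S0 (cop _ _ (ltn_ord r) (ltn_ord t))) mul0r.
  under eq_bigr => r _ do rewrite exchange_big.
  rewrite exchange_big; apply: eq_bigr => k _.
  rewrite -(@geom_sum1 _ _ (e k + f) pw) -(@geom_sum1 _ _ (e k + f) qw).
  rewrite mulr_suml; apply: eq_bigr => r _; rewrite mulr_sumr; apply: eq_bigr => t _.
  rewrite -!exprM -exprD; congr (_ ^+ _); ring.
have key2 : forall k, ((if (p %| e k + f)%N then p%:R else 0) - 1) *
                      ((if (q %| e k + f)%N then q%:R else 0) - 1) =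
   (((p %| e k + f) && (q %| e k + f)) * (p * q) + 1)%N%:R
   - ((p %| e k + f) * p + (q %| e k + f) * q)%N%:R :> algC.
  move=> k; case: (p %| e k + f)%N; case: (q %| e k + f)%N;
  by rewrite /= ?natrD ?natrM; ring.
rewrite (eq_bigr _ (fun k _ => key2 k)) in key; move: key.
rewrite sumrB -!natr_sum => /eqP; rewrite eq_sym subr_eq0 eqr_nat => /eqP.
rewrite big_split /= sum1_card card_ord -big_distrl /= big_split /= -!big_distrl /=.
move=> E; nia.
Qed.

Lemma modq_one p q R : prime p -> prime q -> p != q ->
  (p * R = p %[mod q])%N -> (R = 1 %[mod q])%N.
Proof.
move=> pp pq npq; case: R => [|R].
  rewrite muln0 mod0n => /esym/eqP; rewrite -/(dvdn q p) (dvdn_prime2 pq pp).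
  by rewrite eq_sym (negbTE npq).
rewrite mulnS addnC => /eqP; rewrite -{3}(add0n p) eqn_modDr mod0n -/(dvdn q _).
rewrite Gauss_dvdr; last by rewrite prime_coprime // (dvdn_prime2 pq pp) eq_sym.
by move=> /dvdnP [c ->]; rewrite -addn1 modnMDl.
Qed.

Lemma step3 p q n (e : 'I_n -> nat) : prime p -> prime q -> p != q -> odd p ->
  n = (p + q)%N -> (p %| \sum_k e k)%N ->
  (forall x, \sum_k (e k %% p == x %% p) = 1 %[mod q])%N ->
  forall y, (\sum_k (e k %% p == y %% p))%N = (if (p %| y)%N then q.+1 else 1)%N.
Proof.
move=> pp pq npq op hn Sd Hm.
have p0 := prime_gt0 pp; have q0 := prime_gt0 pq; have q1 := prime_gt1 pq.
pose R := fun x => (\sum_k (e k %% p == x %% p))%N.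
have one : forall k, (\sum_(x < p) (e k %% p == x %% p))%N = 1%N.
  move=> k; rewrite (bigD1 (Ordinal (ltn_pmod (e k) p0))) //= modn_mod eqxx.
  rewrite big1 // => x nx; rewrite (modn_small (ltn_ord x)).
  suff -> : (e k %% p == x)%N = false by [].
  by apply/negbTE; apply: contra nx => /eqP E; apply/eqP/val_inj => /=; rewrite E.
have tot : (\sum_(x < p) R x)%N = n.
  by rewrite /R exchange_big /= (eq_bigr _ (fun k _ => one k)) sum1_card card_ord.
have Rdef : forall x, R x = (R x %/ q * q + 1)%N.
  by move=> x; rewrite {1}(divn_eq (R x) q) Hm (modn_small q1).
have tsum : (\sum_(x < p) (R x %/ q))%N = 1%N.
  have : (\sum_(x < p) (R x %/ q * q + 1))%N = (p + q)%N.
    by rewrite -hn -tot; apply: eq_bigr => x _; rewrite -Rdef.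
  rewrite big_split /= sum1_card card_ord -big_distrl /= => E; nia.
have /sum_nat_eq1 [x0 [_ tx0 t0]] : ((\sum_(x < p) (R x %/ q)) == 1)%N by rewrite tsum.
have wsum : (\sum_k (e k %% p))%N = (\sum_(x < p) x * R x)%N.
  rewrite /R; under [RHS]eq_bigr => x _ do rewrite big_distrr /=.
  rewrite [RHS]exchange_big /=; apply: eq_bigr => k _.
  rewrite (bigD1 (Ordinal (ltn_pmod (e k) p0))) //= modn_mod eqxx muln1.
  rewrite big1 ?addn0 // => x nx; rewrite (modn_small (ltn_ord x)).
  suff -> : (e k %% p == x)%N = false by rewrite muln0.
  by apply/negbTE; apply: contra nx => /eqP E; apply/eqP/val_inj => /=; rewrite E.
have x00 : val x0 = 0%N.
  have : (p %| \sum_(x < p) x * R x)%N.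
    by rewrite -wsum /dvdn modn_summ.
  have S2 : (\sum_(x < p) (x : nat))%N = 'C(p, 2) by rewrite -bin2_sum big_mkord.
  have -> : (\sum_(x < p) x * R x = x0 * q + p * (p.-1)./2)%N.
    under eq_bigr => x _ do rewrite Rdef mulnDr muln1.
    rewrite big_split /= S2 (bin2odd op); congr (_ + _)%N.
    rewrite (bigD1 x0) //= tx0 mul1n big1 ?addn0 // => x nx.
    by rewrite t0 // mul0n muln0.
  rewrite (dvdn_addl _ (dvdn_mulr _ (dvdnn p))) mulnC Gauss_dvdr; last first.
    by rewrite prime_coprime // (dvdn_prime2 pp pq).
  case: (posnP x0) => // x0p; by rewrite gtnNdvd.
move=> y; pose xy := Ordinal (ltn_pmod y p0).
have -> : (\sum_k (e k %% p == y %% p))%N = R xy by rewrite /R /= modn_mod.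
rewrite Rdef; case: ifP => Hy.
  have -> : xy = x0 by apply/val_inj; rewrite x00 /=; apply/eqP.
  by rewrite tx0 mul1n addn1.
rewrite t0 //; apply: contraFN Hy => /eqP E.
by rewrite /dvdn; move: (congr1 val E); rewrite x00 /= => ->.
Qed.

Lemma core p q (z : algC) n (e : 'I_n -> nat) : prime p -> prime q -> p != q ->
  odd p -> odd q -> n = (p + q)%N -> (p * q).-primitive_root z ->
  \sum_k z ^+ e k = 0 -> (p * q %| \sum_k e k)%N ->
  (forall k, (p %| e k)%N || (q %| e k)%N) /\ (exists k, ~~ (p %| e k)%N) /\
  (exists k, ~~ (q %| e k)%N).
Proof.
move=> pp pq npq op oq hn pz S0 SN.
have p0 := prime_gt0 pp; have q0 := prime_gt0 pq; have p1 := prime_gt1 pp.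
have q1 := prime_gt1 pq; have N0 : (0 < p * q)%N by rewrite muln_gt0 p0.
have I1 : forall x, (p * \sum_k (e k == x %[mod p]) + q * \sum_k (e k == x %[mod q]) =
   n + p * q * \sum_k ((e k == x %[mod p]) && (e k == x %[mod q])))%N.
  move=> x; have := @ident p q z n e ((p * q - 1) * x) pp pq npq pz S0.
  have E1 : forall k, (p %| e k + (p * q - 1) * x)%N = (e k == x %[mod p]).
    by move=> k; apply: dvd_shift => //; apply: dvdn_mulr.
  have E2 : forall k, (q %| e k + (p * q - 1) * x)%N = (e k == x %[mod q]).
    by move=> k; apply: dvd_shift => //; apply: dvdn_mull.
  have -> : (\sum_k (p %| e k + (p * q - 1) * x) = \sum_k (e k == x %[mod p]))%N.
    by apply: eq_bigr => k _; rewrite E1.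
  have -> : (\sum_k (q %| e k + (p * q - 1) * x) = \sum_k (e k == x %[mod q]))%N.
    by apply: eq_bigr => k _; rewrite E2.
  have -> : (\sum_k ((p %| e k + (p * q - 1) * x) && (q %| e k + (p * q - 1) * x))
      = \sum_k ((e k == x %[mod p]) && (e k == x %[mod q])))%N.
    by apply: eq_bigr => k _; rewrite E1 E2.
  by [].
have SP := @step3 p q n e pp pq npq op hn (dvdn_trans (dvdn_mulr q (dvdnn p)) SN).
have nqp : q != p by rewrite eq_sym.
have SQ := @step3 q p n e pq pp nqp oq (etrans hn (addnC p q)) (dvdn_trans (dvdn_mull p (dvdnn q)) SN).
have {}SP : forall y, (\sum_k (e k == y %[mod p]))%N = (if (p %| y)%N then q.+1 else 1)%N.
  apply: SP => x; apply: (@modq_one p q _ pp pq npq).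
  have E := I1 x.
  set R := (\sum_k _)%N in E; set C := (\sum_k (e k == x %[mod q]))%N in E.
  set D := (\sum_k _)%N in E.
  have E' : (p * R + C * q = p + (1 + p * D) * q)%N by rewrite [(C * q)%N]mulnC E hn; ring.
  by rewrite -(modnMDl C (p * R)) addnC E' addnC modnMDl.
have {}SQ : forall y, (\sum_k (e k == y %[mod q]))%N = (if (q %| y)%N then p.+1 else 1)%N.
  apply: SQ => x; apply: (@modq_one q p _ pq pp nqp).
  have E := I1 x.
  set R := (\sum_k (e k == x %[mod p]))%N in E; set C := (\sum_k (e k == x %[mod q]))%N in E.
  set D := (\sum_k _)%N in E.
  have E' : (q * C + R * p = q + (1 + q * D) * p)%N by rewrite addnC [(R * p)%N]mulnC E hn; ring.
  by rewrite -(modnMDl R (q * C)) addnC E' addnC modnMDl.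
split.
  move=> k; case: (boolP (p %| e k)%N) => // hp; case: (boolP (q %| e k)%N) => // hq.
  exfalso; have := I1 (e k); rewrite SP SQ (negbTE hp) (negbTE hq) (bigD1 k) //= !eqxx /=.
  set D := (\sum_(i < n | _) _)%N; rewrite !muln1 => E; move: E; rewrite hn.
  move=> /eqP; rewrite -{1}(addn0 (p + q)%N) eqn_add2l eq_sym muln_eq0.
  by rewrite muln_eq0 addn_eq0 /= -!leqn0 leqNgt p0 leqNgt q0.
split.
  case: (pickP (fun k => ~~ (p %| e k)%N)) => [k hk|H]; first by exists k.
  have := SP 0%N; rewrite dvdn0 (eq_bigr (fun _ => 1%N)) ?sum1_card ?card_ord.
    by move=> E; exfalso; rewrite hn in E; lia.
  by move=> k _; move: (H k) => /= /negbFE; rewrite /dvdn mod0n => ->.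
case: (pickP (fun k => ~~ (q %| e k)%N)) => [k hk|H]; first by exists k.
have := SQ 0%N; rewrite dvdn0 (eq_bigr (fun _ => 1%N)) ?sum1_card ?card_ord.
  by move=> E; exfalso; rewrite hn in E; lia.
by move=> k _; move: (H k) => /= /negbFE; rewrite /dvdn mod0n => ->.
Qed.

Lemma conj_pow (z : algC) N g : N.-primitive_root z -> `|z ^+ g| = 1 ->
  (z ^+ g)^* = z ^+ ((N - 1) * g).
Proof.
move=> pz nz; have N0 : (0 < N)%N := prim_order_gt0 pz.
have x0 : z ^+ g != 0 by apply/eqP => E; move: nz; rewrite E normr0 => /eqP; rewrite eq_sym oner_eq0.
have -> : (z ^+ g)^* = (z ^+ g)^-1 by rewrite invC_norm nz expr1n invr1 mul1r.
apply: (mulfI x0); rewrite mulfV // -exprD -{1}(mul1n g) -mulnDl addnC subnK //.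
by rewrite exprM (prim_expr_order pz) expr1n.
Qed.

Lemma geom_contra (T : finType) (U V : T -> nat) a b c d :
  (forall x y, x != y -> U x = U y \/ V x = V y) -> U a <> U b -> V c <> V d -> False.
Proof.
move=> Hxy Uab Vcd.
have ab : a != b by apply/eqP => E; apply: Uab; rewrite E.
have Vab : V a = V b by case: (Hxy a b ab).
have all : forall m, V m = V a.
  move=> m; case: (eqVneq m a) => [-> //|ma].
  case: (eqVneq m b) => [-> //|mb].
  case: (eqVneq (V m) (V a)) => // Vma; exfalso.
  case: (Hxy m a ma) => [Uma|E]; last by rewrite E eqxx in Vma.
  case: (Hxy m b mb) => [Umb|E]; last by rewrite E -Vab eqxx in Vma.
  by apply: Uab; rewrite -Uma Umb.
by apply: Vcd; rewrite !all.
Qed.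

Theorem theorem1p3 (p q : nat) :
  prime p -> prime q -> (5 <= p)%N -> (5 <= q)%N -> p <> q ->
  forall H : 'M[algC]_(p + q), ~ Ccirc (p * q) H.
Proof.
move=> pp pq p5 q5 npq0 H [[Hn Horth] [Hcirc Hroot]].
have npq : p != q by apply/eqP.
have op : odd p by case: (even_prime pp) => // E; rewrite E in p5.
have oq : odd q by case: (even_prime pq) => // E; rewrite E in q5.
have N0 : (0 < p * q)%N by rewrite muln_gt0 !prime_gt0.
have n0 : (0 < p + q)%N by rewrite addn_gt0 prime_gt0.
have [z pz] := C_prim_root_exists N0.
pose G i k : nat := val (sval (prim_rootP pz (Hroot i k))).
have HG : forall i k, H i k = z ^+ G i k.
  by move=> i k; exact: (svalP (prim_rootP pz (Hroot i k))).
pose c0 : 'I_(p + q) := Ordinal n0.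
pose sig (i k : 'I_(p + q)) : 'I_(p + q) := Ordinal (ltn_pmod (k + (p + q - i)) n0).
have circ0 : forall i k, H i k = H c0 (sig i k).
  by move=> i k; apply: Hcirc; rewrite /= subn0 modnDr modn_mod.
have sig_inj : forall i, injective (sig i).
  move=> i k k' /(congr1 val) /= /eqP; rewrite eqn_modDr => /eqP.
  by rewrite !modn_small // => /val_inj.
have sumeq : forall i, (\sum_k G i k = \sum_k G c0 k %[mod p * q])%N.
  have P : forall i, \prod_k H i k = \prod_k z ^+ G i k.
    by move=> i; apply: eq_bigr => k _; exact: HG.
  move=> i; apply/eqP; rewrite -(eq_prim_root_expr pz) -!prodrXr -!P.
  rewrite (eq_bigr _ (fun k _ => circ0 i k)).
  by rewrite [X in _ == X](reindex_inj (sig_inj i)).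
have pair : forall i j, i != j ->
   (forall k, (G i k == G j k %[mod p]) || (G i k == G j k %[mod q])) /\
   (exists k, ~~ (G i k == G j k %[mod p])) /\ (exists k, ~~ (G i k == G j k %[mod q])).
  move=> i j ij.
  pose e k := (G i k + (p * q - 1) * G j k)%N.
  have S0 : \sum_k z ^+ e k = 0.
    rewrite -[RHS](Horth i j ij); apply: eq_bigr => k _.
    by rewrite /e exprD (HG i k) (HG j k) (@conj_pow z (p * q)) // -HG Hn.
  have SN : (p * q %| \sum_k e k)%N.
    rewrite /e big_split /= -big_distrr /= /dvdn -modnDml (sumeq i) -(sumeq j) modnDml.
    by rewrite -{1}(mul1n (\sum_k G j k)) -mulnDl add1n subn1 prednK // mulnC modnMl.
  have [C1 [C2 C3]] := @core p q z _ e pp pq npq op oq erefl pz S0 SN.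
  have Ep : forall k, (p %| e k)%N = (G i k == G j k %[mod p]).
    by move=> k; apply: dvd_shift => //; apply: dvdn_mulr.
  have Eq : forall k, (q %| e k)%N = (G i k == G j k %[mod q]).
    by move=> k; apply: dvd_shift => //; apply: dvdn_mull.
  split; first by move=> k; rewrite -Ep -Eq.
  split; first by case: C2 => k; rewrite Ep; exists k.
  by case: C3 => k; rewrite Eq; exists k.
have transfer : forall i k, exists i', H i k = H i' c0.
  move=> i k; pose r := ((k + (p + q - i)) %% (p + q))%N.
  have rlt : (r < p + q)%N by rewrite ltn_pmod.
  case: (posnP r) => r0.
    exists c0; apply: Hcirc; rewrite /= subn0 add0n modnn; exact: r0.
  have lt : (p + q - r < p + q)%N by rewrite ltn_subrL r0 n0.
  exists (Ordinal lt); apply: Hcirc; rewrite /= add0n subKn ?(ltnW rlt) //.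
  by rewrite /r modn_mod.
have modG : forall d i k i', (d %| p * q)%N -> H i k = H i' c0 ->
    (G i k == G i' c0 %[mod d]).
  move=> d i k i' dN; rewrite !HG => /eqP; rewrite (eq_prim_root_expr pz) => /eqP E.
  by apply/eqP; rewrite -(modn_dvdm _ dN) E modn_dvdm.
have n1 : (1 < p + q)%N by rewrite (leq_trans _ (leq_addr q p)) // prime_gt1.
pose r1 : 'I_(p + q) := Ordinal n1.
have r10 : r1 != c0 by [].
have [Cov [[k1 Hk1] [k2 Hk2]]] := pair r1 c0 r10.
have [a Ha] := transfer r1 k1; have [b Hb] := transfer c0 k1.
have [c Hc] := transfer r1 k2; have [d Hd] := transfer c0 k2.
apply: (@geom_contra _ (fun r => G r c0 %% p)%N (fun r => G r c0 %% q)%N a b c d).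
- move=> x y xy; have [C _] := pair x y xy; have := C c0.
  by case/orP => /eqP E; [left|right].
- move=> E; move: Hk1; rewrite (eqP (modG p _ _ _ (dvdn_mulr _ (dvdnn p)) Ha)).
  by rewrite (eqP (modG p _ _ _ (dvdn_mulr _ (dvdnn p)) Hb)) E eqxx.
- move=> E; move: Hk2; rewrite (eqP (modG q _ _ _ (dvdn_mull _ (dvdnn q)) Hc)).
  by rewrite (eqP (modG q _ _ _ (dvdn_mull _ (dvdnn q)) Hd)) E eqxx.
Qed.
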